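(* For two-stage edge-weighted bipartite matching with advice, the optimal robustness-consistency tradeoff is the line segment between $(R,C)=(0,1)$ and $(R,C)=(\tfrac12,\tfrac12)$: (i) for every $R\in[0,\tfrac12]$ there is an algorithm that is $R$-robust and $(1-R)$-consistent; (ii) for every $R\ge 0$, every $R$-robust algorithm is at most $(1-R)$-consistent (in particular no algorithm is more than $\tfrac12$-robust).
   Context: Setting (two-stage edge-weighted bipartite matching with advice). A bipartite graph $G=(D,S,E)$ with nonnegative edge weights $w_e$ has offline vertices $S$ and online vertices $D=D_1\sqcup D_2$ arriving in two stages; $E_k$ is the set of edges between $D_k$ and $S$. An algorithm sees $(D_1,S,E_1)$ and the advice (a matching $A\subseteq E_1$), irrevocably chooses a (possibly random) matching $M_1\subseteq E_1$, then sees $E_2$ and chooses a matching $M_2\subseteq E_2$ such that $M_1\cup M_2$ is a matching; its value is the expected total edge weight of $M_1\cup M_2$. $\mathsf{OPT}(G)$ is the maximum weight of a matching in $G$; $\mathsf{ADVICE}(G,A)=w(A)+\max\{w(M): M\subseteq E_2,\ A\cup M\text{ a matching}\}$. An algorithm is $R$-robust if its value is $\ge R\cdot\mathsf{OPT}(G)$ for all $G,A$, and $C$-consistent if its value is $\ge C\cdot\mathsf{ADVICE}(G,A)$ for all $G,A$. *)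

(* Defs.v *)
From Stdlib Require Import Reals List Arith Bool Lra.
Import ListNotations.
Open Scope R_scope.

(** Online and offline vertices are named by natural numbers (separate name
    spaces: the first component is always online, the second offline). *)
Definition wedge : Type := (nat * nat * R)%type.
Definition on (e : wedge) : nat := fst (fst e).
Definition off (e : wedge) : nat := snd (fst e).
Definition wt (e : wedge) : R := snd e.

Definition weight (M : list wedge) : R := fold_right Rplus 0 (map wt M).

Fixpoint matchingb (M : list wedge) : bool :=
  match M with
  | [] => true
  | e :: t =>
      forallb (fun f => andb (negb (Nat.eqb (on e) (on f))) (negb (Nat.eqb (off e) (off f)))) t
      && matchingb t
  end.
Definition is_matching (M : list wedge) : Prop := matchingb M = true.

Fixpoint sublists {A : Type} (l : list A) : list (list A) :=
  match l with
  | [] => [[]]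
  | x :: t => let s := sublists t in map (cons x) s ++ s
  end.

(** Maximum of a list of reals (0 for the empty list; all values used below
    are >= 0 and the empty matching always occurs). *)
Definition maxR (l : list R) : R := fold_right Rmax 0 l.

Record instance : Type := mkInstance {
  D1 : list nat; D2 : list nat; S : list nat;
  E1 : list wedge; E2 : list wedge }.

Definition well_formed (G : instance) : Prop :=
  NoDup (D1 G) /\ NoDup (D2 G) /\ NoDup (S G) /\
  (forall d, In d (D1 G) -> ~ In d (D2 G)) /\
  (forall e, In e (E1 G) -> In (on e) (D1 G) /\ In (off e) (S G) /\ 0 <= wt e) /\
  (forall e, In e (E2 G) -> In (on e) (D2 G) /\ In (off e) (S G) /\ 0 <= wt e) /\
  NoDup (map (@fst (nat * nat) R) (E1 G ++ E2 G)).

Definition advice_ok (G : instance) (A : list wedge) : Prop :=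
  is_matching A /\ incl A (E1 G).

Definition OPT (G : instance) : R :=
  maxR (map weight (filter matchingb (sublists (E1 G ++ E2 G)))).

Definition ADVICE (G : instance) (A : list wedge) : R :=
  weight A + maxR (map weight (filter (fun M => matchingb (A ++ M)) (sublists (E2 G)))).

(** Finitely supported probability distributions over edge sets
    (every distribution on the finitely many sub-matchings of a finite edge
    set is of this form). *)
Definition dist : Type := list (R * list wedge).
Definition is_dist (p : dist) : Prop :=
  (forall q, In q p -> 0 <= fst q) /\ fold_right Rplus 0 (map fst p) = 1.

(** Stage 1 sees (D1, S, E1 with weights) and the advice A, and outputs a
    distribution over M1.
    Stage 2 additionally sees the realized M1 and (D2, E2 with weights), and
    outputs a distribution over M2. *)
Record algorithm : Type := mkAlg {
  stage1 : list nat -> list nat -> list wedge -> list wedge -> dist;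
  stage2 : list nat -> list nat -> list wedge -> list wedge -> list wedge ->
           list nat -> list wedge -> dist }.

Definition run1 (alg : algorithm) (G : instance) (A : list wedge) : dist :=
  stage1 alg (D1 G) (S G) (E1 G) A.
Definition run2 (alg : algorithm) (G : instance) (A M1 : list wedge) : dist :=
  stage2 alg (D1 G) (S G) (E1 G) A M1 (D2 G) (E2 G).

Definition valid_alg (alg : algorithm) : Prop :=
  forall G A, well_formed G -> advice_ok G A ->
    is_dist (run1 alg G A) /\
    forall q1, In q1 (run1 alg G A) -> 0 < fst q1 ->
      is_matching (snd q1) /\ incl (snd q1) (E1 G) /\
      is_dist (run2 alg G A (snd q1)) /\
      forall q2, In q2 (run2 alg G A (snd q1)) -> 0 < fst q2 ->
        incl (snd q2) (E2 G) /\ is_matching (snd q1 ++ snd q2).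

Definition value (alg : algorithm) (G : instance) (A : list wedge) : R :=
  fold_right Rplus 0
    (map (fun q1 => fst q1 * (weight (snd q1) +
            fold_right Rplus 0
              (map (fun q2 => fst q2 * weight (snd q2)) (run2 alg G A (snd q1)))))
       (run1 alg G A)).

Definition robust (Rr : R) (alg : algorithm) : Prop :=
  forall G A, well_formed G -> advice_ok G A -> value alg G A >= Rr * OPT G.

Definition consistent (C : R) (alg : algorithm) : Prop :=
  forall G A, well_formed G -> advice_ok G A -> value alg G A >= C * ADVICE G A.

(* Main.v *)
Require Import Defs.
From Stdlib Require Import Reals List Lra Bool Arith.
Import ListNotations.
Open Scope R_scope.

Lemma sum_le {A} (f g : A -> R) l : (forall x, In x l -> f x <= g x) ->
  fold_right Rplus 0 (map f l) <= fold_right Rplus 0 (map g l).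
Proof. induction l; simpl; intros H; [lra|]. apply Rplus_le_compat; auto. Qed.

Lemma sum_scal (c : R) (l : list (R * list wedge)) :
  fold_right Rplus 0 (map (fun q => fst q * c) l) = c * fold_right Rplus 0 (map fst l).
Proof. induction l; simpl; [ring|]. rewrite IHl; ring. Qed.

Lemma maxR_ge l x : In x l -> x <= maxR l.
Proof. induction l; simpl; intros H; [destruct H|]. destruct H as [<-|H].
  apply Rmax_l. eapply Rle_trans; [apply IHl; auto|apply Rmax_r]. Qed.

Lemma maxR_le l X : 0 <= X -> (forall x, In x l -> x <= X) -> maxR l <= X.
Proof. induction l; simpl; intros H0 H; [lra|]. apply Rmax_lub; auto. Qed.

Lemma weight_nil : weight [] = 0. Proof. reflexivity. Qed.
Lemma weight_cons x t : weight (x :: t) = wt x + weight t. Proof. reflexivity. Qed.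
Lemma weight_app a b : weight (a ++ b) = weight a + weight b.
Proof. induction a; simpl app; [rewrite weight_nil; ring|]. rewrite !weight_cons, IHa; ring. Qed.
Lemma weight_nonneg M : (forall e, In e M -> 0 <= wt e) -> 0 <= weight M.
Proof. induction M; intros H; [rewrite weight_nil; lra|]. rewrite weight_cons.
  assert (0 <= wt a) by (apply H; left; auto). assert (0 <= weight M) by (apply IHM; intros; apply H; right; auto). lra. Qed.

Lemma sublists_incl (l M : list wedge) : In M (sublists l) -> incl M l.
Proof. revert M; induction l; simpl; intros M H.
  - destruct H as [<-|[]]. apply incl_nil_l.
  - apply in_app_or in H. destruct H as [H|H].
    + apply in_map_iff in H. destruct H as [M' [<- H]]. apply incl_cons; [left; auto|].
      apply incl_tl; auto.
    + apply incl_tl; auto. Qed.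

Lemma nil_in_sublists (l : list wedge) : In [] (sublists l).
Proof. induction l; simpl; auto. apply in_or_app; right; auto. Qed.

Lemma sublists_app (l1 l2 M : list wedge) : In M (sublists (l1 ++ l2)) ->
  exists s1 s2, M = s1 ++ s2 /\ In s1 (sublists l1) /\ In s2 (sublists l2).
Proof. revert M; induction l1; simpl; intros M H.
  - exists [], M; auto.
  - apply in_app_or in H. destruct H as [H|H].
    + apply in_map_iff in H. destruct H as [M' [<- H]].
      destruct (IHl1 _ H) as [s1 [s2 [-> [H1 H2]]]].
      exists (a :: s1), s2; split; auto. split; auto. apply in_or_app; left; apply in_map; auto.
    + destruct (IHl1 _ H) as [s1 [s2 [-> [H1 H2]]]].
      exists s1, s2; split; auto. split; auto. apply in_or_app; right; auto. Qed.

Lemma matchingb_app_l a b : matchingb (a ++ b) = true -> matchingb a = true.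
Proof. induction a; simpl; auto. intros H. apply andb_prop in H. destruct H as [H1 H2].
  rewrite forallb_app in H1. apply andb_prop in H1. destruct H1 as [H1 _].
  rewrite H1; simpl; auto. Qed.
Lemma matchingb_app_r a b : matchingb (a ++ b) = true -> matchingb b = true.
Proof. induction a; simpl; auto. intros H. apply andb_prop in H. destruct H; auto. Qed.

Definition argmaxW (d : list wedge) (l : list (list wedge)) : list wedge :=
  fold_right (fun M b => if Rle_dec (weight b) (weight M) then M else b) d l.

Lemma argmaxW_in d l : argmaxW d l = d \/ In (argmaxW d l) l.
Proof. induction l; simpl; auto. destruct (Rle_dec _ _). right; left; auto.
  destruct IHl; [left|right; right]; auto. Qed.

Lemma argmaxW_ge d l : weight d <= weight (argmaxW d l) /\
  forall M, In M l -> weight M <= weight (argmaxW d l).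
Proof. induction l; simpl; [split; [lra|intros _ []]|].
  destruct IHl as [H1 H2]. destruct (Rle_dec _ _) as [r|r]; split.
  - lra.
  - intros M [<-|HM]; [lra|]. specialize (H2 M HM); lra.
  - auto.
  - intros M [<-|HM]; [lra|auto]. Qed.

Definition compl (M1 E2 : list wedge) :=
  argmaxW [] (filter (fun M => matchingb (M1 ++ M)) (sublists E2)).
Definition choose1 (E1 A : list wedge) := argmaxW A (filter matchingb (sublists E1)).

Lemma compl_ok M1 E2 : matchingb M1 = true ->
  matchingb (M1 ++ compl M1 E2) = true /\ incl (compl M1 E2) E2.
Proof. intros H. unfold compl. destruct (argmaxW_in [] (filter (fun M => matchingb (M1 ++ M)) (sublists E2))) as [E|E].
  - rewrite E, app_nil_r; split; auto. apply incl_nil_l.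
  - apply filter_In in E. destruct E; split; auto. apply sublists_incl; auto. Qed.

Lemma compl_ge M1 E2 M : In M (sublists E2) -> matchingb (M1 ++ M) = true -> weight M <= weight (compl M1 E2).
Proof. intros. apply (argmaxW_ge []). apply filter_In; auto. Qed.
Lemma compl_nonneg M1 E2 : 0 <= weight (compl M1 E2).
Proof. rewrite <- weight_nil. unfold compl. apply (proj1 (argmaxW_ge [] _)). Qed.

Lemma choose1_ok E1 A : is_matching A -> incl A E1 -> is_matching (choose1 E1 A) /\ incl (choose1 E1 A) E1.
Proof. intros. unfold choose1. destruct (argmaxW_in A (filter matchingb (sublists E1))) as [E|E].
  - rewrite E; auto.
  - apply filter_In in E. destruct E; split; auto. apply sublists_incl; auto. Qed.

Lemma choose1_ge E1 A M : In M (sublists E1) -> matchingb M = true -> weight M <= weight (choose1 E1 A).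
Proof. intros. apply (argmaxW_ge A). apply filter_In; auto. Qed.
Lemma choose1_geA E1 A : weight A <= weight (choose1 E1 A).
Proof. apply (proj1 (argmaxW_ge A _)). Qed.
Lemma choose1_nonneg E1 A : 0 <= weight (choose1 E1 A).
Proof. rewrite <- weight_nil. apply choose1_ge. apply nil_in_sublists. reflexivity. Qed.

Definition algR (r : R) : algorithm :=
  mkAlg (fun _ _ E1 A => [(1 - 2 * r, A); (r, choose1 E1 A); (r, [])])
        (fun _ _ _ _ M1 _ E2 => [(1, compl M1 E2)]).

Lemma value_algR r G A : value (algR r) G A =
  (1 - 2*r) * (weight A + weight (compl A (Defs.E2 G))) +
  r * (weight (choose1 (Defs.E1 G) A) + weight (compl (choose1 (Defs.E1 G) A) (Defs.E2 G))) +
  r * (weight (compl [] (Defs.E2 G))).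
Proof. unfold value, run1, run2. cbn [algR stage1 stage2 map fold_right fst snd].
  rewrite weight_nil. ring. Qed.

Lemma algR_valid r : 0 <= r <= 1/2 -> valid_alg (algR r).
Proof. intros Hr G A Hwf [HA HAi]. unfold run1, run2; cbn [algR stage1 stage2 fst snd].
  split.
  - split; [|simpl; lra]. intros q Hq. simpl in Hq.
    destruct Hq as [<-|[<-|[<-|[]]]]; simpl; lra.
  - intros q1 Hq1 Hp. assert (HM : is_matching (snd q1) /\ incl (snd q1) (Defs.E1 G)).
    { simpl in Hq1. destruct Hq1 as [<-|[<-|[<-|[]]]]; simpl.
      - auto.
      - apply choose1_ok; auto.
      - split; [reflexivity|apply incl_nil_l]. }
    destruct HM as [HM HMi]. split; auto. split; auto. split.
    + split; [|simpl; lra]. intros q [<-|[]]; simpl; lra.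
    + intros q2 [<-|[]] _. simpl. destruct (compl_ok (snd q1) (Defs.E2 G) HM). auto. Qed.

Lemma adv_le1 G A : ADVICE G A <= weight A + weight (compl A (Defs.E2 G)).
Proof. unfold ADVICE. apply Rplus_le_compat_l. apply maxR_le; [apply compl_nonneg|].
  intros x Hx. apply in_map_iff in Hx. destruct Hx as [M [<- HM]].
  apply filter_In in HM. destruct HM. apply compl_ge; auto. Qed.

Lemma adv_le2 G A : ADVICE G A <= weight (choose1 (Defs.E1 G) A) + weight (compl [] (Defs.E2 G)).
Proof. unfold ADVICE. apply Rplus_le_compat; [apply choose1_geA|].
  apply maxR_le; [apply compl_nonneg|].
  intros x Hx. apply in_map_iff in Hx. destruct Hx as [M [<- HM]].
  apply filter_In in HM. destruct HM. apply compl_ge; auto. simpl.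
  eapply matchingb_app_r; eauto. Qed.

Lemma opt_le G A : OPT G <= weight (choose1 (Defs.E1 G) A) + weight (compl [] (Defs.E2 G)).
Proof. unfold OPT. apply maxR_le.
  { pose proof (choose1_nonneg (Defs.E1 G) A). pose proof (compl_nonneg [] (Defs.E2 G)). lra. }
  intros x Hx. apply in_map_iff in Hx. destruct Hx as [M [<- HM]].
  apply filter_In in HM. destruct HM as [HM Hm].
  destruct (sublists_app _ _ _ HM) as [s1 [s2 [-> [H1 H2]]]].
  rewrite weight_app. apply Rplus_le_compat.
  - apply choose1_ge; auto. eapply matchingb_app_l; eauto.
  - apply compl_ge; auto. simpl. eapply matchingb_app_r; eauto. Qed.

Lemma algR_good r : 0 <= r <= 1/2 -> robust r (algR r) /\ consistent (1 - r) (algR r).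
Proof. intros Hr. split; intros G A Hwf [HA HAi]; rewrite value_algR.
  - assert (HwA : 0 <= weight A).
    { apply weight_nonneg. intros e He. destruct Hwf as [_ [_ [_ [_ [H _]]]]].
      apply (H e (HAi e He)). }
    pose proof (compl_nonneg A (Defs.E2 G)).
    pose proof (compl_nonneg (choose1 (Defs.E1 G) A) (Defs.E2 G)).
    pose proof (opt_le G A).
    assert (0 <= (1 - 2*r) * (weight A + weight (compl A (Defs.E2 G)))) by (apply Rmult_le_pos; lra).
    assert (r * OPT G <= r * (weight (choose1 (Defs.E1 G) A) + weight (compl [] (Defs.E2 G))))
      by (apply Rmult_le_compat_l; lra).
    assert (0 <= r * weight (compl (choose1 (Defs.E1 G) A) (Defs.E2 G))) by (apply Rmult_le_pos; lra).
    nra.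
  - pose proof (adv_le1 G A). pose proof (adv_le2 G A).
    pose proof (compl_nonneg (choose1 (Defs.E1 G) A) (Defs.E2 G)).
    assert ((1 - 2*r) * ADVICE G A <= (1 - 2*r) * (weight A + weight (compl A (Defs.E2 G))))
      by (apply Rmult_le_compat_l; lra).
    assert (r * ADVICE G A <= r * (weight (choose1 (Defs.E1 G) A) + weight (compl [] (Defs.E2 G))))
      by (apply Rmult_le_compat_l; lra).
    assert (0 <= r * weight (compl (choose1 (Defs.E1 G) A) (Defs.E2 G))) by (apply Rmult_le_pos; lra).
    nra. Qed.
Definition e1 : wedge := (0%nat, 0%nat, 1).
Definition e2 (W : R) : wedge := (1%nat, 0%nat, W).
Definition G1 := mkInstance [0%nat] [] [0%nat] [e1] [].
Definition G2 W := mkInstance [0%nat] [1%nat] [0%nat] [e1] [e2 W].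
Ltac wf_tac := unfold well_formed; simpl; repeat split;
  repeat match goal with H : _ \/ False |- _ => destruct H as [H|[]]; subst end;
  simpl; try lra; auto;
  try (intros ? [<-|[]] [H|[]]; discriminate);
  try (intros ? []);
  repeat (constructor; simpl; [intuition discriminate|]); try constructor.
Lemma wf1 : well_formed G1. Proof. wf_tac. Qed.
Lemma wf2 W : 0 <= W -> well_formed (G2 W). Proof. intros HW. wf_tac. Qed.

Lemma adv_nil G : advice_ok G [].
Proof. split; [reflexivity|apply incl_nil_l]. Qed.

Lemma opt1 : OPT G1 = 1.
Proof. unfold OPT; simpl. unfold maxR, weight; simpl. unfold Rmax.
  repeat destruct Rle_dec; lra. Qed.

Lemma opt2 W : W <= OPT (G2 W).
Proof. unfold OPT. replace W with (weight [e2 W]) at 1 by (unfold weight; simpl; ring).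
  apply maxR_ge. apply in_map. simpl. auto. Qed.

Lemma adv2 W : W <= ADVICE (G2 W) [].
Proof. unfold ADVICE. rewrite weight_nil.
  replace W with (weight [e2 W]) at 1 by (unfold weight; simpl; ring).
  rewrite Rplus_0_l. apply maxR_ge. apply in_map. simpl. auto. Qed.

Lemma single_match (x : wedge) M : incl M [x] -> matchingb M = true -> M = [] \/ M = [x].
Proof. intros Hi Hm. destruct M as [|a [|b t]]; auto.
  - right. assert (In a [x]) by (apply Hi; left; auto). destruct H as [<-|[]]; auto.
  - assert (In a [x]) by (apply Hi; left; auto). assert (In b [x]) by (apply Hi; right; left; auto).
    destruct H as [<-|[]]. destruct H0 as [<-|[]].
    simpl in Hm. rewrite Nat.eqb_refl in Hm. simpl in Hm. discriminate. Qed.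

Lemma sum_lin (W : R) (l : list (R * list wedge)) :
  fold_right Rplus 0 (map (fun q => fst q * (weight (snd q) + (1 - weight (snd q)) * W)) l) =
  (1 - W) * fold_right Rplus 0 (map (fun q => fst q * weight (snd q)) l) + W * fold_right Rplus 0 (map fst l).
Proof. induction l; simpl; [ring|]. rewrite IHl; ring. Qed.

Definition pA (alg : algorithm) := fold_right Rplus 0 (map (fun q => fst q * weight (snd q)) (run1 alg G1 [])).

Lemma v1 alg : valid_alg alg -> value alg G1 [] <= pA alg.
Proof. intros Hv. destruct (Hv G1 [] wf1 (adv_nil _)) as [[Hnn _] H2].
  unfold value, pA. apply sum_le. intros q1 Hq.
  destruct (Rle_lt_or_eq_dec 0 (fst q1) (Hnn q1 Hq)) as [Hp|He].
  2:{ rewrite <- He. lra. }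
  destruct (H2 q1 Hq Hp) as [_ [_ [[Hn2 _] H4]]].
  assert (fold_right Rplus 0 (map (fun q2 => fst q2 * weight (snd q2)) (run2 alg G1 [] (snd q1))) <=
          fold_right Rplus 0 (map (fun q2 => fst q2 * 0) (run2 alg G1 [] (snd q1)))).
  { apply sum_le. intros q2 Hq2.
    destruct (Rle_lt_or_eq_dec 0 (fst q2) (Hn2 q2 Hq2)) as [Hp2|He2].
    2:{ rewrite <- He2. lra. }
    destruct (H4 q2 Hq2 Hp2) as [Hi _]. simpl in Hi.
    apply incl_l_nil in Hi. rewrite Hi, weight_nil. lra. }
  rewrite sum_scal in H. apply Rmult_le_compat_l; lra. Qed.

Lemma v2 alg W : 0 <= W -> valid_alg alg ->
  value alg (G2 W) [] <= (1 - W) * pA alg + W.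
Proof. intros HW Hv. destruct (Hv (G2 W) [] (wf2 W HW) (adv_nil _)) as [[Hnn Hs] H2].
  unfold pA. change (run1 alg G1 []) with (run1 alg (G2 W) []).
  apply Rle_trans with (fold_right Rplus 0 (map (fun q => fst q * (weight (snd q) + (1 - weight (snd q)) * W)) (run1 alg (G2 W) []))).
  2:{ rewrite sum_lin, Hs. lra. }
  unfold value. apply sum_le. intros q1 Hq.
  destruct (Rle_lt_or_eq_dec 0 (fst q1) (Hnn q1 Hq)) as [Hp|He].
  2:{ rewrite <- He. lra. }
  destruct (H2 q1 Hq Hp) as [Hm1 [Hi1 [[Hn2 Hs2] H4]]].
  assert (fold_right Rplus 0 (map (fun q2 => fst q2 * weight (snd q2)) (run2 alg (G2 W) [] (snd q1))) <=
          fold_right Rplus 0 (map (fun q2 => fst q2 * ((1 - weight (snd q1)) * W)) (run2 alg (G2 W) [] (snd q1)))).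
  { apply sum_le. intros q2 Hq2.
    destruct (Rle_lt_or_eq_dec 0 (fst q2) (Hn2 q2 Hq2)) as [Hp2|He2].
    2:{ rewrite <- He2. lra. }
    apply Rmult_le_compat_l; [lra|].
    destruct (H4 q2 Hq2 Hp2) as [Hi Hm]. simpl in Hi.
    pose proof (matchingb_app_r _ _ Hm) as Hm2.
    destruct (single_match _ _ Hi1 Hm1) as [E1|E1];
    destruct (single_match _ _ Hi Hm2) as [E2|E2]; rewrite E1, E2 in *.
    - rewrite !weight_nil. lra.
    - unfold weight; simpl. lra.
    - unfold weight; simpl. lra.
    - simpl in Hm. discriminate. }
  rewrite sum_scal, Hs2 in H. apply Rmult_le_compat_l; lra. Qed.

Lemma part3 Rr alg : valid_alg alg -> robust Rr alg -> Rr <= 1/2.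
Proof. intros Hv Hr. destruct (Rle_dec Rr (1/2)) as [|Hn]; auto. exfalso.
  pose proof (v1 alg Hv) as H1. pose proof (Hr G1 [] wf1 (adv_nil _)) as R1. rewrite opt1 in R1.
  set (k := 2*Rr - 1). assert (Hk : 0 < k) by (unfold k; lra).
  set (W := (Rr + 1)/k + 1).
  assert (HWk : W * k = Rr + 1 + k) by (unfold W; field; lra).
  assert (HW1 : 1 <= W) by (unfold W; assert (0 < (Rr+1)/k) by (apply Rdiv_lt_0_compat; lra); lra).
  pose proof (v2 alg W ltac:(lra) Hv) as H2.
  pose proof (Hr (G2 W) [] (wf2 W ltac:(lra)) (adv_nil _)) as R2.
  pose proof (opt2 W).
  assert (Rr * W <= Rr * OPT (G2 W)) by (apply Rmult_le_compat_l; lra).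
  assert ((1 - W) * pA alg <= (1 - W) * Rr) by (apply Rmult_le_compat_neg_l; lra).
  unfold k in HWk. nra. Qed.

Lemma part2 Rr C alg : 0 <= Rr -> valid_alg alg -> robust Rr alg -> consistent C alg -> C <= 1 - Rr.
Proof. intros H0 Hv Hr Hc. pose proof (part3 Rr alg Hv Hr).
  destruct (Rle_dec C (1 - Rr)) as [|Hn]; auto. exfalso.
  pose proof (v1 alg Hv) as H1. pose proof (Hr G1 [] wf1 (adv_nil _)) as R1. rewrite opt1 in R1.
  set (k := C - 1 + Rr). assert (Hk : 0 < k) by (unfold k; lra).
  set (W := (Rr + 1)/k + 1).
  assert (HWk : W * k = Rr + 1 + k) by (unfold W; field; lra).
  assert (HW1 : 1 <= W) by (unfold W; assert (0 < (Rr+1)/k) by (apply Rdiv_lt_0_compat; lra); lra).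
  pose proof (v2 alg W ltac:(lra) Hv) as H2.
  pose proof (Hc (G2 W) [] (wf2 W ltac:(lra)) (adv_nil _)) as R2.
  pose proof (adv2 W).
  assert (C * W <= C * ADVICE (G2 W) []) by (apply Rmult_le_compat_l; lra).
  assert ((1 - W) * pA alg <= (1 - W) * Rr) by (apply Rmult_le_compat_neg_l; lra).
  unfold k in HWk. nra. Qed.

Theorem mainTheorem7 :
  (forall Rr : R, 0 <= Rr <= 1 / 2 ->
     exists alg : algorithm,
       valid_alg alg /\ robust Rr alg /\ consistent (1 - Rr) alg) /\
  (forall (Rr C : R) (alg : algorithm), 0 <= Rr ->
     valid_alg alg -> robust Rr alg -> consistent C alg -> C <= 1 - Rr) /\
  (forall (Rr : R) (alg : algorithm), valid_alg alg -> robust Rr alg -> Rr <= 1 / 2).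
Proof.
  split; [|split].
  - intros Rr H. exists (algR Rr). split; [apply algR_valid; auto|apply algR_good; auto].
  - exact part2.
  - exact part3.
Qed.
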